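(* Let $I\subseteq\mathbb{K}[x_1,\dots,x_d]$ be an ideal generated by at most $d-1$ pure difference binomials. There exists a non-trivial linear loop such that every polynomial $p\in I$ is an invariant of the loop.
   Context: $\mathbb{K}=\overline{\mathbb{Q}}$. A pure difference binomial is $\bm{x}^{\bm{\alpha}}-\bm{x}^{\bm{\beta}}$ with $\bm{\alpha},\bm{\beta}\in\mathbb{N}^d$. A linear loop with initial vector $\bm{s}\in\mathbb{Q}^d$ and update matrix $M\in\mathbb{Q}^{d\times d}$ has orbit $\{M^n\bm{s} : n\ge0\}$; a polynomial $P$ is an invariant if $P(M^n\bm{s})=0$ for all $n\ge0$. The loop is non-trivial if its orbit is an infinite set. *)

(* Defs.v *)
From HB Require Import structures.
From mathcomp Require Import all_boot all_order all_algebra all_field.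
From mathcomp Require Import mpoly.
Set Implicit Arguments. Unset Strict Implicit. Unset Printing Implicit Defensive.
Import GRing.Theory Num.Theory.
Local Open Scope ring_scope.

Notation K := algC.

Definition monomial (d : nat) (alpha : 'I_d -> nat) : {mpoly K[d]} :=
  \prod_(i < d) 'X_i ^+ alpha i.

Definition pure_diff_binomial (d : nat) (alpha beta : 'I_d -> nat) : {mpoly K[d]} :=
  monomial alpha - monomial beta.

Definition in_ideal_gen (d : nat) (gs : seq {mpoly K[d]}) (p : {mpoly K[d]}) : Prop :=
  exists c : 'I_(size gs) -> {mpoly K[d]}, p = \sum_(i < size gs) c i * gs`_i.

Definition orbit_pt (d : nat) (s : 'cV[rat]_d) (M : 'M[rat]_d) (n : nat) : 'cV[rat]_d :=
  M ^+ n *m s.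

(* Non-trivial loop: the orbit {M^n s | n >= 0} is an infinite set. *)
Definition nontrivial_loop (d : nat) (s : 'cV[rat]_d) (M : 'M[rat]_d) : Prop :=
  ~ (exists l : seq 'cV[rat]_d, forall n : nat, orbit_pt s M n \in l).

Definition is_invariant (d : nat) (s : 'cV[rat]_d) (M : 'M[rat]_d) (P : {mpoly K[d]}) : Prop :=
  forall n : nat, P.@[fun i : 'I_d => ratr (orbit_pt s M n i 0)] = 0.

(* Main.v *)
Require Import Defs.
From HB Require Import structures.
From mathcomp Require Import all_boot all_order all_algebra all_field.
From mathcomp Require Import mpoly.
Import GRing.Theory Num.Theory.
Local Open Scope ring_scope.

Lemma orbitE d (a : 'I_d -> rat) n i :
  orbit_pt (const_mx 1) (diag_mx (\row_j a j)) n i 0 = a i ^+ n.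
Proof.
rewrite /orbit_pt; elim: n => [|n IH].
  by rewrite expr0 -[1]/(1%:M) mul1mx mxE.
by rewrite exprS -mulmxE -mulmxA mul_diag_mx mxE IH mxE exprS.
Qed.

Lemma prod_exprz (x : rat) (x0 : x \is a GRing.unit) d (z : 'I_d -> int) :
  \prod_i x ^ z i = x ^ (\sum_i z i).
Proof.
elim/big_rec2: _ => [|i y1 y2 _ ->]; first by rewrite expr0z.
by rewrite exprzDr.
Qed.

Lemma mono_eval d (w : 'I_d -> int) (al : 'I_d -> nat) n :
  (monomial al).@[fun i => ratr (orbit_pt (const_mx 1) (diag_mx (\row_j ((2%:Q) ^ w j))) n i 0)]
  = ratr ((2%:Q ^ (\sum_i w i * (al i)%:Z)) ^+ n) :> K.
Proof.
rewrite /monomial rmorph_prod.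
under eq_bigr do rewrite rmorphXn /= mevalXU orbitE.
rewrite -prod_exprz ?unitfE // -prodrXl rmorph_prod; apply: eq_bigr => i _.
by rewrite -rmorphXn exprAC -exprz_exp.
Qed.

Lemma kern d (gens : seq (('I_d -> nat) * ('I_d -> nat))) ab0 (hsize : (size gens < d)%N) :
  exists w : 'I_d -> int, (exists i, w i != 0) /\
    forall k, (k < size gens)%N ->
      \sum_i w i * (((nth ab0 gens k).1 i)%:Z) = \sum_i w i * (((nth ab0 gens k).2 i)%:Z).
Proof.
pose A : 'M[rat]_(d, size gens) :=
  \matrix_(i, k) (((nth ab0 gens k).1 i)%:R - ((nth ab0 gens k).2 i)%:R).
have : kermx A != 0.
  rewrite -mxrank_eq0 mxrank_ker subn_eq0 -ltnNge.
  exact: leq_ltn_trans (rank_leq_col A) hsize.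
case/rowV0Pn => v /sub_kermxP vA v0.
have [i0 vi0] : exists i, v 0 i != 0.
  apply/existsP; apply: contraR v0 => /existsPn H; apply/eqP/rowP => j.
  by rewrite mxE; apply/eqP; move: (H j); rewrite negbK.
pose w i := numq (v 0 i) * \prod_(j | j != i) denq (v 0 j).
pose D : rat := \prod_j (denq (v 0 j))%:~R.
have wE i : (w i)%:~R = v 0 i * D.
  rewrite /D (bigD1 i) //= rmorphM rmorph_prod /= mulrA; congr (_ * _).
  by rewrite -{2}(divq_num_den (v 0 i)) mulfVK // intr_eq0 denq_neq0.
exists w; split.
  exists i0; rewrite mulf_neq0 ?numq_eq0 //.
  by rewrite prodf_seq_neq0; apply/allP => j _; apply/implyP => _; rewrite denq_neq0.
move=> k kl.
apply/eqP; rewrite -subr_eq0 -sumrB -(intr_eq0 rat) rmorph_sum /=.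
have := congr1 (fun M : 'rV_(size gens) => M 0 (Ordinal kl)) vA; rewrite !mxE => H.
have H2 : \sum_j D * (v 0 j * A j (Ordinal kl)) = 0 by rewrite -mulr_sumr H mulr0.
rewrite -[X in _ == X]H2; apply/eqP; apply: eq_bigr => i _.
rewrite !mxE /= -mulrBr rmorphM /= wE rmorphB /= -mulrA mulrCA //.
Qed.

Theorem theorem5p1 (d : nat) (gens : seq (('I_d -> nat) * ('I_d -> nat)))
  (hsize : (size gens < d)%N) :
  exists (s : 'cV[rat]_d) (M : 'M[rat]_d),
    nontrivial_loop s M /\
    forall p : {mpoly K[d]},
      in_ideal_gen [seq pure_diff_binomial ab.1 ab.2 | ab <- gens] p ->
      is_invariant s M p.
Proof.
pose ab0 : ('I_d -> nat) * ('I_d -> nat) := (fun=> 0%N, fun=> 0%N).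
have [w [[i0 wi0] Hw]] := @kern d gens ab0 hsize.
exists (const_mx 1), (diag_mx (\row_j ((2%:Q) ^ w j))); split.
  move=> [l Hl].
  have a0 : 0 < (2%:Q) ^ w i0 by rewrite exprz_gt0.
  have a1 : (2%:Q) ^ w i0 != 1.
    apply: contra wi0 => /eqP e; apply/eqP.
    by apply: (@ieexprIz _ (2%:Q)) => //; rewrite e expr0z.
  have inj : injective (orbit_pt (const_mx 1) (diag_mx (\row_j ((2%:Q) ^ w j)))).
    move=> m n e; have := congr1 (fun M : 'cV_d => M i0 0) e.
    by rewrite /= !orbitE; apply: ieexprIn.
  have := uniq_leq_size (s2 := l) (etrans (map_inj_uniq inj _) (iota_uniq 0 (size l).+1)).
  rewrite size_map size_iota ltnn => H.
  suff : false by [].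
  by apply: H => x /mapP [n _ ->].
move=> p [c ->] n.
rewrite raddf_sum /=; apply: big1 => k _.
rewrite mevalM.
have kl : (k < size gens)%N by rewrite -(size_map (fun ab => pure_diff_binomial ab.1 ab.2)).
rewrite (nth_map ab0) // /pure_diff_binomial mevalB !mono_eval Hw // subrr mulr0 //.
Qed.
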